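(* Let $\rho\colon\mathcal{F}\to[\Lambda]^\omega$ with $\mathcal{F}\subseteq[\Omega]^\omega$ be a partition regular function. (1) If $\rho_{\mathsf{BI}}\leq_K\rho$, then $\rho\notin P^-_2(\Lambda)$. If moreover $\rho\in(S_1)$, then $\rho_{\mathsf{BI}}\leq_K\rho$ if and only if $\rho\notin P^-_2(\Lambda)$. (2) If $\omega^2+1\in\mathrm{FinBW}(\rho)$, then $\rho\in P^-_2(\Lambda)$. If moreover $\rho\in(S_2)$, then $\rho\in P^-_2(\Lambda)$ if and only if $\omega^2+1\in\mathrm{FinBW}(\rho)$, where the ordinal $\omega^2+1$ carries the order topology.
   Context: All topological spaces are Hausdorff. An ideal on a nonempty set $X$ is a family $\mathcal{I}\subseteq\mathcal{P}(X)$ with $\emptyset\in\mathcal{I}$, $X\notin\mathcal{I}$, closed under finite unions and subsets, containing all finite subsets; $\mathcal{I}^+=\mathcal{P}(X)\setminus\mathcal{I}$. Partition regular function: $\Lambda,\Omega$ countably infinite, $\mathcal{F}$ a nonempty family of infinite subsets of $\Omega$ with $F\setminus K\in\mathcal{F}$ for $F\in\mathcal{F}$, $K$ finite; $\rho\colon\mathcal{F}\to[\Lambda]^\omega$ is partition regular if (M) $E\subseteq F\Rightarrow\rho(E)\subseteq\rho(F)$; (R) if $F\in\mathcal{F}$ and $\rho(F)=A\cup B$ then some $E\in\mathcal{F}$ has $\rho(E)\subseteq A$ or $\rho(E)\subseteq B$; (S) for every $E\in\mathcal{F}$ there is $F\in\mathcal{F}$, $F\subseteq E$, such that every $a\in\rho(F)$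 satisfies $a\notin\rho(F\setminus K)$ for some finite $K\subseteq\Omega$. $\mathcal{I}_\rho=\{A\subseteq\Lambda:\forall F\in\mathcal{F}\ \rho(F)\not\subseteq A\}$. For an ideal $\mathcal{I}$ on a countable set $\Lambda$, $\rho_{\mathcal{I}}\colon\mathcal{I}^+\to[\Lambda]^\omega$, $\rho_{\mathcal{I}}(A)=A$ (with $\Omega=\Lambda$). $\rho$-convergence and $\mathrm{FinBW}(\rho)$: for $f\colon\Lambda\to X$ and $F\in\mathcal{F}$, $f\restriction\rho(F)$ $\rho$-converges to $x$ if for every neighborhood $U$ of $x$ there is a finite $K\subseteq\Omega$ with $f[\rho(F\setminus K)]\subseteq U$; $\mathrm{FinBW}(\rho)$ is the class of spaces $X$ such that for every $f\colon\Lambda\to X$ some $F\in\mathcal{F}$ makes $f\restriction\rho(F)$ $\rho$-convergent to some point of $X$. Katětov order: $\rho_2\leq_K\rho_1$ (for $\rho_i\colon\mathcal{F}_i\to[\Lambda_i]^\omega$, $\mathcal{F}_i\subseteq[\Omega_i]^\omega$) if there is $f\colon\Lambda_1\to\Lambda_2$ such that for every $F_1\in\mathcal{F}_1$ there is $F_2\in\mathcal{F}_2$ such that for every finite $K_1\subseteq\Omega_1$ there is a finite $K_2\subseteq\Omega_2$ with $\rho_2(F_2\setminus K_2)\subseteq f[\rho_1(F_1\setminus K_1)]$. $\mathrm{FIN}^2$ on $\omega^2$: $A\in\mathrm{FIN}^2$ iff there is $i_0$ with $\{j:(i,j)\in A\}$ finite for all $i\ge i_0$. $\mathsf{BI}$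 is the ideal on $\omega^3$: $A\in\mathsf{BI}$ iff there is $i_0$ such that $\{(j,k):(i,j,k)\in A\}\in\mathrm{FIN}^2$ for all $i<i_0$ and $\{(j,k):(i,j,k)\in A\}$ is finite for all $i\geq i_0$. $\rho\in P^-_2(\Lambda)$ means: for every partition $\{A_{i,j}:i,j\in\omega\}$ of $\Lambda$ with all $A_{i,j}\in\mathcal{I}_\rho$ there is $F\in\mathcal{F}$ such that (a) for all $i,j$ there is a finite $K\subseteq\Omega$ with $\rho(F\setminus K)\cap A_{i,j}=\emptyset$, and (b) there is $i_0$ such that for all $i>i_0$ there is a finite $K\subseteq\Omega$ with $\rho(F\setminus K)\cap\bigcup_{j}A_{i,j}=\emptyset$. $\rho\in(S_1)$: for every $E\in\mathcal{F}$ there is $F\in\mathcal{F}$, $F\subseteq E$, such that for every $A\in\mathcal{I}_\rho$ there is $G\in\mathcal{F}$ with $\rho(G)\subseteq\rho(F)\setminus A$ and for every finite $K$ there is a finite $L$ with $\rho(G\setminus L)\subseteq\rho(F\setminus K)$. $\rho\in(S_2)$: for every $E\in\mathcal{F}$ there is $F\in\mathcal{F}$, $F\subseteq E$, such that for every $B\subseteq\rho(F)$ with $B\notin\mathcal{I}_\rho$ there is $G\in\mathcal{F}$ with $\rho(G)\subseteq B$ and for every finite $K$ there is a finite $L$ with $\rho(G\setminus L)\subseteq\rho(F\setminus K)$. *)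

(* Defs.v *)
From Stdlib Require Import List Arith.
Import ListNotations.

Definition finite {A : Type} (K : A -> Prop) : Prop :=
  exists l : list A, forall x, K x -> In x l.

Definition infinite {A : Type} (K : A -> Prop) : Prop := ~ finite K.

Definition countably_infinite (T : Type) : Prop :=
  exists e : nat -> T, (forall m n, e m = e n -> m = n) /\ (forall t, exists n, e n = t).

Definition subset {A : Type} (X Y : A -> Prop) : Prop := forall x, X x -> Y x.

Definition setminus {A : Type} (X K : A -> Prop) : A -> Prop := fun x => X x /\ ~ K x.

Definition image {A B : Type} (f : A -> B) (X : A -> Prop) : B -> Prop :=
  fun y => exists x, X x /\ f x = y.

Definition disjoint {A : Type} (X Y : A -> Prop) : Prop := forall x, X x -> Y x -> False.

Definition partition_regular {Lam Om : Type}
  (Fam : (Om -> Prop) -> Prop) (rho : (Om -> Prop) -> (Lam -> Prop)) : Prop :=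
  countably_infinite Lam /\ countably_infinite Om /\
  (exists F, Fam F) /\
  (forall F, Fam F -> infinite F) /\
  (forall F K, Fam F -> finite K -> Fam (setminus F K)) /\
  (forall F, Fam F -> infinite (rho F)) /\
  (forall E F, Fam E -> Fam F -> subset E F -> subset (rho E) (rho F)) /\
  (forall F (A B : Lam -> Prop), Fam F ->
     (forall l, rho F l <-> (A l \/ B l)) ->
     exists E, Fam E /\ (subset (rho E) A \/ subset (rho E) B)) /\
  (* (S) *)
  (forall E, Fam E -> exists F, Fam F /\ subset F E /\
     forall a, rho F a -> exists K, finite K /\ ~ rho (setminus F K) a).

Definition I_rho {Lam Om : Type} (Fam : (Om -> Prop) -> Prop)
  (rho : (Om -> Prop) -> (Lam -> Prop)) (A : Lam -> Prop) : Prop :=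
  forall F, Fam F -> ~ subset (rho F) A.

(* Katetov order: rho2 <=_K rho1 *)
Definition katetov_le {Lam1 Om1 Lam2 Om2 : Type}
  (Fam2 : (Om2 -> Prop) -> Prop) (rho2 : (Om2 -> Prop) -> (Lam2 -> Prop))
  (Fam1 : (Om1 -> Prop) -> Prop) (rho1 : (Om1 -> Prop) -> (Lam1 -> Prop)) : Prop :=
  exists f : Lam1 -> Lam2,
    forall F1, Fam1 F1 -> exists F2, Fam2 F2 /\
      forall K1, finite K1 -> exists K2, finite K2 /\
        subset (rho2 (setminus F2 K2)) (image f (rho1 (setminus F1 K1))).

Definition FIN2 (A : nat * nat -> Prop) : Prop :=
  exists i0, forall i, i0 <= i -> finite (fun j => A (i, j)).

Definition BI (A : nat * (nat * nat) -> Prop) : Prop :=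
  exists i0, forall i,
    (i < i0 -> FIN2 (fun p => A (i, p))) /\
    (i0 <= i -> finite (fun p => A (i, p))).

(* rho_I : I^+ -> [Lambda]^omega, rho_I(A) = A *)
Definition Fam_ideal {L : Type} (I : (L -> Prop) -> Prop) : (L -> Prop) -> Prop :=
  fun A => ~ I A.
Definition rho_ideal {L : Type} (A : L -> Prop) : L -> Prop := A.

Definition rho_BI_le_K {Lam Om : Type} (Fam : (Om -> Prop) -> Prop)
  (rho : (Om -> Prop) -> (Lam -> Prop)) : Prop :=
  katetov_le (Fam_ideal BI) (@rho_ideal (nat * (nat * nat))) Fam rho.

Definition P2minus {Lam Om : Type} (Fam : (Om -> Prop) -> Prop)
  (rho : (Om -> Prop) -> (Lam -> Prop)) : Prop :=
  forall A : nat -> nat -> Lam -> Prop,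
    (forall l, exists i j, A i j l) ->
    (forall i j i' j', (i, j) <> (i', j') -> disjoint (A i j) (A i' j')) ->
    (forall i j, I_rho Fam rho (A i j)) ->
    exists F, Fam F /\
      (forall i j, exists K, finite K /\ disjoint (rho (setminus F K)) (A i j)) /\
      (exists i0, forall i, i0 < i -> exists K, finite K /\
         disjoint (rho (setminus F K)) (fun l => exists j, A i j l)).

Definition S1 {Lam Om : Type} (Fam : (Om -> Prop) -> Prop)
  (rho : (Om -> Prop) -> (Lam -> Prop)) : Prop :=
  forall E, Fam E -> exists F, Fam F /\ subset F E /\
    forall A, I_rho Fam rho A -> exists G, Fam G /\
      subset (rho G) (setminus (rho F) A) /\
      forall K, finite K -> exists L, finite L /\
        subset (rho (setminus G L)) (rho (setminus F K)).

Definition S2 {Lam Om : Type} (Fam : (Om -> Prop) -> Prop)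
  (rho : (Om -> Prop) -> (Lam -> Prop)) : Prop :=
  forall E, Fam E -> exists F, Fam F /\ subset F E /\
    forall B, subset B (rho F) -> ~ I_rho Fam rho B -> exists G, Fam G /\
      subset (rho G) B /\
      forall K, finite K -> exists L, finite L /\
        subset (rho (setminus G L)) (rho (setminus F K)).

(* FinBW(rho) membership of a space X given by its neighbourhood relation *)
Definition FinBW {Lam Om X : Type} (nbhd : X -> (X -> Prop) -> Prop)
  (Fam : (Om -> Prop) -> Prop) (rho : (Om -> Prop) -> (Lam -> Prop)) : Prop :=
  forall f : Lam -> X, exists F, Fam F /\ exists x,
    forall U, nbhd x U -> exists K, finite K /\ subset (image f (rho (setminus F K))) U.

(* The ordinal omega^2 + 1: Some (i,j) stands for omega*i + j, None for omega^2 *)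
Definition ord_w2_1 : Type := option (nat * nat).

Definition ord_lt (x y : ord_w2_1) : Prop :=
  match x, y with
  | Some (i, j), Some (i', j') => i < i' \/ (i = i' /\ j < j')
  | Some _, None => True
  | None, _ => False
  end.

(* Order topology: U is a neighbourhood of x iff it contains a basic open set
   (an open interval, an open ray, or the whole space) containing x;
   [None] as an endpoint means "unbounded". *)
Definition ord_nbhd (x : ord_w2_1) (U : ord_w2_1 -> Prop) : Prop :=
  exists lo hi : option ord_w2_1,
    (forall a, lo = Some a -> ord_lt a x) /\
    (forall b, hi = Some b -> ord_lt x b) /\
    forall y, (forall a, lo = Some a -> ord_lt a y) ->
              (forall b, hi = Some b -> ord_lt y b) -> U y.

(* Main.v *)
Require Import Defs.
From Stdlib Require Import List Arith Lia Classical ClassicalEpsilon.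
Import ListNotations.

Definition Mono {Lam Om : Type} (Fam : (Om -> Prop) -> Prop)
  (rho : (Om -> Prop) -> (Lam -> Prop)) : Prop :=
  forall E F, Fam E -> Fam F -> subset E F -> subset (rho E) (rho F).
Definition Closed {Om : Type} (Fam : (Om -> Prop) -> Prop) : Prop :=
  forall F K, Fam F -> finite K -> Fam (setminus F K).

Lemma finite_empty {A : Type} : finite (fun _ : A => False).
Proof. exists []; intros x []. Qed.

Lemma finite_sub {A : Type} (X Y : A -> Prop) : subset X Y -> finite Y -> finite X.
Proof. intros H [l Hl]; exists l; auto. Qed.

Lemma finite_app {A : Type} (X Y : A -> Prop) :
  finite X -> finite Y -> finite (fun x => X x \/ Y x).
Proof.
  intros [l1 H1] [l2 H2]; exists (l1 ++ l2); intros x [h|h]; apply in_or_app; auto.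
Qed.

Lemma rho_sm_sub {Lam Om} (Fam : (Om -> Prop) -> Prop) (rho : (Om -> Prop) -> (Lam -> Prop)) F K :
  Mono Fam rho -> Closed Fam -> Fam F -> finite K -> subset (rho (setminus F K)) (rho F).
Proof.
  intros Hm Hc HF HK; apply Hm; auto. intros x [h _]; exact h.
Qed.

Lemma rho_sm_le {Lam Om} (Fam : (Om -> Prop) -> Prop) (rho : (Om -> Prop) -> (Lam -> Prop)) F G K K' :
  Mono Fam rho -> Closed Fam -> Fam F -> Fam G -> subset F G -> finite K -> finite K' ->
  subset K K' -> subset (rho (setminus F K')) (rho (setminus G K)).
Proof.
  intros Hm Hc HF HG HFG HK HK' Hs; apply Hm; auto.
  intros x [h1 h2]; split; auto.
Qed.

Lemma BI_single (X : nat * (nat * nat) -> Prop) (l : list (nat * (nat * nat))) i j :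
  (forall p, X p -> In p l \/ (fst p = i /\ fst (snd p) = j)) -> BI X.
Proof.
  intros H. exists (S i). intros i'; split.
  - intros Hi. exists (S j). intros j' Hj. exists (map (fun p => snd (snd p)) l).
    intros k Hk. destruct (H _ Hk) as [h|[h1 h2]].
    + apply (in_map (fun p => snd (snd p))) in h; exact h.
    + simpl in h2; lia.
  - intros Hi. exists (map (fun p => snd p) l). intros p Hp.
    destruct (H _ Hp) as [h|[h1 h2]].
    + apply (in_map (fun p => snd p)) in h; exact h.
    + simpl in h1; lia.
Qed.

Lemma BI_crit (X : nat * (nat * nat) -> Prop) i0 :
  (forall i j, exists l, forall k, X (i, (j, k)) -> In (i, (j, k)) l) ->
  (forall i, i0 < i -> exists l, forall p, X (i, p) -> In (i, p) l) -> BI X.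
Proof.
  intros Hc Hr. exists (S i0). intros i; split.
  - intros Hi. exists 0. intros j _. destruct (Hc i j) as [l Hl].
    exists (map (fun p => snd (snd p)) l). intros k Hk.
    exact (in_map (fun p => snd (snd p)) _ _ (Hl k Hk)).
  - intros Hi. destruct (Hr i ltac:(lia)) as [l Hl].
    exists (map (fun p => snd p) l). intros p Hp.
    exact (in_map (fun p => snd p) _ _ (Hl p Hp)).
Qed.

Lemma part1a {Lam Om} (Fam : (Om -> Prop) -> Prop) (rho : (Om -> Prop) -> (Lam -> Prop)) :
  Mono Fam rho -> Closed Fam -> rho_BI_le_K Fam rho -> ~ P2minus Fam rho.
Proof.
  intros Hm Hc [f Hf] HP.
  set (B := fun i j l => fst (f l) = i /\ fst (snd (f l)) = j).
  destruct (HP B) as [F [HF [Ha [i0 Hb]]]].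
  - intro l; exists (fst (f l)), (fst (snd (f l))); split; reflexivity.
  - intros i j i' j' Hne l [H1 H2] [H3 H4]; apply Hne; congruence.
  - intros i j F HF Hsub. destruct (Hf F HF) as [F2 [HF2 HK]].
    destruct (HK (fun _ => False) finite_empty) as [K2 [[l2 HK2] Hsub2]].
    apply HF2. apply (BI_single _ l2 i j). intros p Hp.
    destruct (classic (K2 p)) as [h|h]; [left; auto|right].
    destruct (Hsub2 p (conj Hp h)) as [l [Hl Hfl]].
    apply (rho_sm_sub Fam rho F _ Hm Hc HF finite_empty) in Hl.
    destruct (Hsub l Hl) as [e1 e2]. subst p. auto.
  - destruct (Hf F HF) as [F2 [HF2 HK]]. apply HF2. apply (BI_crit _ i0).
    + intros i j. destruct (Ha i j) as [K [HKf Hd]].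
      destruct (HK K HKf) as [K2 [[l2 Hl2] Hs]]. exists l2. intros k Hk.
      destruct (classic (K2 (i, (j, k)))) as [h|h]; [auto|].
      destruct (Hs _ (conj Hk h)) as [l [Hl Hfl]]. exfalso. apply (Hd l Hl).
      unfold B; rewrite Hfl; auto.
    + intros i Hi. destruct (Hb i Hi) as [K [HKf Hd]].
      destruct (HK K HKf) as [K2 [[l2 Hl2] Hs]]. exists l2. intros p Hp.
      destruct (classic (K2 (i, p))) as [h|h]; [auto|].
      destruct (Hs _ (conj Hp h)) as [l [Hl Hfl]]. exfalso. apply (Hd l Hl).
      exists (fst p). unfold B; rewrite Hfl; auto.
Qed.


Definition lo_ok (lo : option ord_w2_1) (y : ord_w2_1) : Prop :=
  match lo with Some a => ord_lt a y | None => True end.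
Definition hi_ok (hi : option ord_w2_1) (y : ord_w2_1) : Prop :=
  match hi with Some b => ord_lt y b | None => True end.

Lemma nbhd_mk x lo hi (U : ord_w2_1 -> Prop) :
  lo_ok lo x -> hi_ok hi x -> (forall y, lo_ok lo y -> hi_ok hi y -> U y) -> ord_nbhd x U.
Proof.
  intros H1 H2 H3. exists lo, hi. split; [|split].
  - intros a ->; exact H1.
  - intros b ->; exact H2.
  - intros y Hl Hh. apply H3.
    + destruct lo; simpl; auto.
    + destruct hi; simpl; auto.
Qed.

Lemma nbhd_use x U : ord_nbhd x U ->
  exists lo hi, lo_ok lo x /\ hi_ok hi x /\ (forall y, lo_ok lo y -> hi_ok hi y -> U y).
Proof.
  intros [lo [hi [H1 [H2 H3]]]]. exists lo, hi. split; [|split].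
  - destruct lo; simpl; auto.
  - destruct hi; simpl; auto.
  - intros y Hl Hh. apply H3.
    + intros a ->; exact Hl.
    + intros b ->; exact Hh.
Qed.

Lemma nbhd_self x U : ord_nbhd x U -> U x.
Proof. intros H; destruct (nbhd_use _ _ H) as [lo [hi [H1 [H2 H3]]]]; auto. Qed.

Lemma part2a {Lam Om} (Fam : (Om -> Prop) -> Prop) (rho : (Om -> Prop) -> (Lam -> Prop)) :
  Closed Fam -> FinBW ord_nbhd Fam rho -> P2minus Fam rho.
Proof.
  intros Hc HFB A Hcov Hdisj HI.
  assert (ch : forall l, {p : nat * nat | A (fst p) (snd p) l}).
  { intro l. apply constructive_indefinite_description.
    destruct (Hcov l) as [i [j h]]. exists (i, j); exact h. }
  set (f := fun l => Some (fst (proj1_sig (ch l)), S (snd (proj1_sig (ch l)))) : ord_w2_1).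
  assert (fA : forall l i j, A i j l -> f l = Some (i, S j)).
  { intros l i j h. unfold f. destruct (ch l) as [[a b] hp]; simpl in *.
    destruct (classic ((a, b) = (i, j))) as [e|ne].
    - inversion e; subst; reflexivity.
    - exfalso; exact (Hdisj _ _ _ _ ne l hp h). }
  destruct (HFB f) as [F [HF [x Hx]]].
  assert (avoid : forall P : ord_w2_1 -> Prop, ord_nbhd x (fun y => ~ P y) ->
            exists K, finite K /\ forall l, rho (setminus F K) l -> ~ P (f l)).
  { intros P HP. destruct (Hx _ HP) as [K [HK Hs]]. exists K; split; auto.
    intros l Hl. apply (Hs (f l)). exists l; auto. }
  destruct x as [[i [|j]]|].
  - exists F; split; [auto|split].
    + intros i' j'.
      destruct (avoid (fun y => y = Some (i', S j'))) as [K [HK HKs]].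
      { destruct (Nat.lt_ge_cases i' i).
        - apply (nbhd_mk _ (Some (Some (i', S j'))) None); simpl; auto.
          intros [[y1 y2]|] Hl _ e; inversion e; subst; simpl in Hl; lia.
        - apply (nbhd_mk _ None (Some (Some (i, 1)))); simpl; auto.
          intros [[y1 y2]|] _ Hh e; inversion e; subst; simpl in Hh; lia. }
      exists K; split; auto. intros l H1 H2. apply (HKs l H1). apply fA; auto.
    + exists i. intros i' Hi'.
      destruct (avoid (fun y => exists j, y = Some (i', j))) as [K [HK HKs]].
      { apply (nbhd_mk _ None (Some (Some (i, 1)))); simpl; auto.
        intros [[y1 y2]|] _ Hh [j e]; inversion e; subst; simpl in Hh; lia. }
      exists K; split; auto. intros l H1 [j H2]. apply (HKs l H1). exists (S j); apply fA; auto.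
  - exfalso.
    destruct (Hx (fun y => y = Some (i, S j))) as [K [HK Hs]].
    { apply (nbhd_mk _ (Some (Some (i, j))) (Some (Some (i, S (S j))))); simpl; try lia.
      intros [[y1 y2]|] Hl Hh; simpl in *; [f_equal; f_equal; lia | contradiction]. }
    apply (HI i j (setminus F K) (Hc F K HF HK)). intros l Hl.
    assert (e : f l = Some (i, S j)) by (apply Hs; exists l; auto).
    destruct (Hcov l) as [i' [j' h]]. rewrite (fA _ _ _ h) in e. inversion e; subst; auto.
  - exists F; split; [auto|split].
    + intros i' j'.
      destruct (avoid (fun y => y = Some (i', S j'))) as [K [HK HKs]].
      { apply (nbhd_mk _ (Some (Some (i', S j'))) None); simpl; auto.
        intros [[y1 y2]|] Hl _ e; inversion e; subst; simpl in Hl; lia. }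
      exists K; split; auto. intros l H1 H2. apply (HKs l H1). apply fA; auto.
    + exists 0. intros i' Hi'.
      destruct (avoid (fun y => exists j, y = Some (i', j))) as [K [HK HKs]].
      { apply (nbhd_mk _ (Some (Some (S i', 0))) None); simpl; auto.
        intros [[y1 y2]|] Hl _ [j e]; inversion e; subst; simpl in Hl; lia. }
      exists K; split; auto. intros l H1 [j H2]. apply (HKs l H1). exists (S j); apply fA; auto.
Qed.


Definition Rprop {Lam Om : Type} (Fam : (Om -> Prop) -> Prop)
  (rho : (Om -> Prop) -> (Lam -> Prop)) : Prop :=
  forall F (A B : Lam -> Prop), Fam F ->
     (forall l, rho F l <-> (A l \/ B l)) ->
     exists E, Fam E /\ (subset (rho E) A \/ subset (rho E) B).

Lemma I_sub {Lam Om} (Fam : (Om -> Prop) -> Prop) (rho : (Om -> Prop) -> (Lam -> Prop)) X Y :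
  subset X Y -> I_rho Fam rho Y -> I_rho Fam rho X.
Proof. intros Hs HY F HF H. apply (HY F HF). intros l h; auto. Qed.

Lemma I_union {Lam Om} (Fam : (Om -> Prop) -> Prop) (rho : (Om -> Prop) -> (Lam -> Prop)) X Y :
  Rprop Fam rho -> I_rho Fam rho X -> I_rho Fam rho Y -> I_rho Fam rho (fun l => X l \/ Y l).
Proof.
  intros HR HX HY F HF Hs.
  destruct (HR F (fun l => rho F l /\ X l) (fun l => rho F l /\ Y l) HF) as [E [HE [H|H]]].
  - intro l; split; [intro h; destruct (Hs l h); tauto | tauto].
  - apply (HX E HE); intros l hl; apply H; auto.
  - apply (HY E HE); intros l hl; apply H; auto.
Qed.

Lemma I_union_lt {Lam Om} (Fam : (Om -> Prop) -> Prop) (rho : (Om -> Prop) -> (Lam -> Prop))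
  (P : nat -> Lam -> Prop) n :
  Rprop Fam rho -> (forall F, Fam F -> infinite (rho F)) ->
  (forall i, i < n -> I_rho Fam rho (P i)) ->
  I_rho Fam rho (fun l => exists i, i < n /\ P i l).
Proof.
  intros HR Hinf. induction n as [|n IH]; intros H.
  - intros F HF Hs. apply (Hinf F HF). exists []. intros l h. destruct (Hs l h) as [i [Hi _]]; lia.
  - apply (I_sub _ _ _ (fun l => (exists i, i < n /\ P i l) \/ P n l)).
    + intros l [i [Hi h]]. destruct (Nat.eq_dec i n) as [->|ne]; [right; auto|left; exists i; split; auto; lia].
    + apply I_union; auto.
Qed.

Definition EA {Lam Om} (Fam : (Om -> Prop) -> Prop) (rho : (Om -> Prop) -> (Lam -> Prop)) G (X : Lam -> Prop) :=
  exists L, finite L /\ forall l, rho (setminus G L) l -> ~ X l.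

Lemma EA_sub {Lam Om} (Fam : (Om -> Prop) -> Prop) (rho : (Om -> Prop) -> (Lam -> Prop)) G X Y :
  subset Y X -> EA Fam rho G X -> EA Fam rho G Y.
Proof. intros Hs [L [HL H]]; exists L; split; auto. intros l h1 h2; apply (H l h1); auto. Qed.

Lemma EA_empty {Lam Om} (Fam : (Om -> Prop) -> Prop) (rho : (Om -> Prop) -> (Lam -> Prop)) G :
  EA Fam rho G (fun _ => False).
Proof. exists (fun _ => False); split; [apply finite_empty|]. intros l _ []. Qed.

Lemma EA_union {Lam Om} (Fam : (Om -> Prop) -> Prop) (rho : (Om -> Prop) -> (Lam -> Prop)) G X Y :
  Mono Fam rho -> Closed Fam -> Fam G ->
  EA Fam rho G X -> EA Fam rho G Y -> EA Fam rho G (fun l => X l \/ Y l).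
Proof.
  intros Hm Hc HG [L1 [HL1 H1]] [L2 [HL2 H2]].
  assert (HL : finite (fun o => L1 o \/ L2 o)) by (apply finite_app; auto).
  exists (fun o => L1 o \/ L2 o); split; auto. intros l h [hx|hy].
  - apply (H1 l); auto. apply (rho_sm_le Fam rho G G L1 _ Hm Hc HG HG (fun x h => h) HL1 HL); auto.
    intros o ho; auto.
  - apply (H2 l); auto. apply (rho_sm_le Fam rho G G L2 _ Hm Hc HG HG (fun x h => h) HL2 HL); auto.
    intros o ho; auto.
Qed.

Lemma EA_lt {Lam Om} (Fam : (Om -> Prop) -> Prop) (rho : (Om -> Prop) -> (Lam -> Prop)) G
  (R : nat -> Lam -> Prop) n :
  Mono Fam rho -> Closed Fam -> Fam G ->
  (forall i, i < n -> EA Fam rho G (R i)) -> EA Fam rho G (fun l => exists i, i < n /\ R i l).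
Proof.
  intros Hm Hc HG. induction n as [|n IH]; intros H.
  - apply (EA_sub _ _ _ (fun _ => False)); [|apply EA_empty].
    intros l [i [Hi _]]; lia.
  - apply (EA_sub _ _ _ (fun l => (exists i, i < n /\ R i l) \/ R n l)).
    + intros l [i [Hi h]]. destruct (Nat.eq_dec i n) as [->|ne]; [right; auto|left; exists i; split; auto; lia].
    + apply EA_union; auto.
Qed.

Lemma EA_down {Lam Om} (Fam : (Om -> Prop) -> Prop) (rho : (Om -> Prop) -> (Lam -> Prop)) F G X :
  (forall K, finite K -> exists L, finite L /\ subset (rho (setminus G L)) (rho (setminus F K))) ->
  EA Fam rho F X -> EA Fam rho G X.
Proof.
  intros Ht [K [HK H]]. destruct (Ht K HK) as [L [HL Hs]]. exists L; split; [exact HL|].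
  intros l h; exact (H l (Hs l h)).
Qed.


Definition KO {Om} (e : nat -> Om) (n : nat) : Om -> Prop := fun o => exists k, k < n /\ e k = o.

Lemma finite_KO {Om} (e : nat -> Om) n : finite (KO e n).
Proof.
  exists (map e (seq 0 n)). intros o [k [Hk <-]]. apply in_map. apply in_seq. lia.
Qed.

Lemma KO_mono {Om} (e : nat -> Om) n m : n <= m -> subset (KO e n) (KO e m).
Proof. intros H o [k [Hk e']]; exists k; split; auto; lia. Qed.

Lemma enum_cover {Om} (e : nat -> Om) : (forall o, exists k, e k = o) ->
  forall K, finite K -> exists N, subset K (KO e N).
Proof.
  intros He K [l Hl].
  assert (H : exists N, forall o, In o l -> KO e N o).
  { clear Hl. induction l as [|a l IH].
    - exists 0; intros o [].
    - destruct IH as [N HN]. destruct (He a) as [k Hk]. exists (max N (S k)).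
      intros o [<-|h].
      + exists k; split; auto; lia.
      + apply (KO_mono e N); [lia|auto]. }
  destruct H as [N HN]; exists N; intros o h; auto.
Qed.

Lemma gen_D {Lam Om} (Fam : (Om -> Prop) -> Prop) (rho : (Om -> Prop) -> (Lam -> Prop))
  (eO : nat -> Om) F (S : nat -> Lam -> Prop) :
  Mono Fam rho -> Closed Fam -> Fam F -> (forall o, exists k, eO k = o) ->
  (forall a, exists K, finite K /\ ~ rho (setminus F K) a) ->
  (forall m K, finite K -> exists l, rho (setminus F K) l /\ S m l) ->
  exists d : nat -> nat -> Lam, (forall m n, S m (d m n)) /\
    (forall m n, rho (setminus F (KO eO (m + n))) (d m n)) /\
    (forall m (l : list Lam), exists n, ~ In (d m n) l).
Proof.
  intros Hm Hc HF He HSp HSm.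
  assert (ch : forall m n, {l | rho (setminus F (KO eO (m + n))) l /\ S m l}).
  { intros m n. apply constructive_indefinite_description. apply HSm. apply finite_KO. }
  exists (fun m n => proj1_sig (ch m n)). split; [|split].
  - intros m n; exact (proj2 (proj2_sig (ch m n))).
  - intros m n; exact (proj1 (proj2_sig (ch m n))).
  - intros m l.
    assert (HK : exists K, finite K /\ forall a, In a l -> ~ rho (setminus F K) a).
    { induction l as [|a l IH].
      - exists (fun _ => False); split; [apply finite_empty|]. intros a [].
      - destruct IH as [K' [HK' H']]. destruct (HSp a) as [Ka [HKa Ha]].
        assert (HU : finite (fun o => Ka o \/ K' o)) by (apply finite_app; auto).
        exists (fun o => Ka o \/ K' o); split; auto. intros a' [<-|h] hr.
        + apply Ha. apply (rho_sm_le Fam rho F F Ka _ Hm Hc HF HF (fun x h => h) HKa HU); auto.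
          intros o ho; auto.
        + apply (H' a' h). apply (rho_sm_le Fam rho F F K' _ Hm Hc HF HF (fun x h => h) HK' HU); auto.
          intros o ho; auto. }
    destruct HK as [K [HK HKl]]. destruct (enum_cover eO He K HK) as [N HN].
    exists N. intro hin. apply (HKl _ hin).
    pose proof (proj1 (proj2_sig (ch m N))) as hx.
    apply (rho_sm_le Fam rho F F K _ Hm Hc HF HF (fun x h => h) HK (finite_KO eO (m + N))); auto.
    intros o ho; apply (KO_mono eO N); [lia|auto].
Qed.

Lemma kat_cond {Lam Om} (Fam : (Om -> Prop) -> Prop) (rho : (Om -> Prop) -> (Lam -> Prop))
  (eO : nat -> Om) (f : Lam -> nat * (nat * nat)) (d : nat -> nat -> Lam) F F1 :
  Mono Fam rho -> Closed Fam -> Fam F -> Fam F1 -> subset F F1 -> (forall o, exists k, eO k = o) ->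
  (forall m n, rho (setminus F (KO eO (m + n))) (d m n)) ->
  forall K1, finite K1 -> exists K2, finite K2 /\
    subset (rho_ideal (setminus (fun p => exists m n, f (d m n) = p) K2)) (image f (rho (setminus F1 K1))).
Proof.
  intros Hm Hc HF HF1 HFF He Hd K1 HK1.
  destruct (enum_cover eO He K1 HK1) as [N HN].
  exists (fun p => exists m n, m < N /\ n < N /\ f (d m n) = p). split.
  - exists (flat_map (fun m => map (fun n => f (d m n)) (seq 0 N)) (seq 0 N)).
    intros p [m [n [Hm' [Hn <-]]]]. apply in_flat_map. exists m; split.
    + apply in_seq; lia.
    + apply (in_map (fun n => f (d m n))). apply in_seq; lia.
  - intros p [[m [n <-]] Hn]. exists (d m n); split; auto.
    assert (Hmn : N <= m + n).
    { destruct (Nat.lt_ge_cases m N), (Nat.lt_ge_cases n N); try lia.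
      exfalso; apply Hn; exists m, n; auto. }
    apply (rho_sm_le Fam rho F F1 K1 (KO eO (m + n)) Hm Hc HF HF1 HFF HK1 (finite_KO _ _)); auto.
    intros o ho. apply (KO_mono eO N); auto.
Qed.


Definition Sprop {Lam Om : Type} (Fam : (Om -> Prop) -> Prop)
  (rho : (Om -> Prop) -> (Lam -> Prop)) : Prop :=
  forall E, Fam E -> exists F, Fam F /\ subset F E /\
     forall a, rho F a -> exists K, finite K /\ ~ rho (setminus F K) a.

Lemma neg_tail {Lam Om} (Fam : (Om -> Prop) -> Prop) (rho : (Om -> Prop) -> (Lam -> Prop)) F G X :
  (forall K, finite K -> exists L, finite L /\ subset (rho (setminus G L)) (rho (setminus F K))) ->
  ~ (forall K, finite K -> exists l, rho (setminus F K) l /\ X l) ->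
  exists L, finite L /\ disjoint (rho (setminus G L)) X.
Proof.
  intros Ht Hn. apply not_all_ex_not in Hn as [K Hn]. apply imply_to_and in Hn as [HK Hn].
  destruct (Ht K HK) as [L [HL Hs]]. exists L; split; auto.
  intros l h1 h2. apply Hn. exists l; auto.
Qed.

Lemma part1b {Lam Om} (Fam : (Om -> Prop) -> Prop) (rho : (Om -> Prop) -> (Lam -> Prop)) :
  countably_infinite Lam -> countably_infinite Om ->
  Mono Fam rho -> Closed Fam -> Rprop Fam rho -> (forall F, Fam F -> infinite (rho F)) ->
  Sprop Fam rho -> S1 Fam rho -> ~ P2minus Fam rho -> rho_BI_le_K Fam rho.
Proof.
  intros [eL [_ eLs]] [eO [_ eOs]] Hm Hc HR Hinf HSp HS1 HnP.
  unfold P2minus in HnP. apply not_all_ex_not in HnP as [A HnP].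
  apply imply_to_and in HnP as [Hcov HnP].
  apply imply_to_and in HnP as [Hdisj HnP].
  apply imply_to_and in HnP as [HI HnoF].
  assert (c : forall l, {n | eL n = l}).
  { intro l; apply constructive_indefinite_description; auto. }
  assert (chA : forall l, {p : nat * nat | A (fst p) (snd p) l}).
  { intro l. apply constructive_indefinite_description.
    destruct (Hcov l) as [i [j h]]. exists (i, j); exact h. }
  set (f := fun l => (fst (proj1_sig (chA l)), (snd (proj1_sig (chA l)), proj1_sig (c l)))).
  assert (fA : forall l i j, A i j l -> f l = (i, (j, proj1_sig (c l)))).
  { intros l i j h. unfold f. destruct (chA l) as [[a b] hp]; simpl in *.
    destruct (classic ((a, b) = (i, j))) as [e|ne].
    - inversion e; subst; reflexivity.
    - exfalso; exact (Hdisj _ _ _ _ ne l hp h). }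
  assert (ec : forall l, eL (proj1_sig (c l)) = l) by (intro l; exact (proj2_sig (c l))).
  exists f. intros F1 HF1.
  destruct (HSp F1 HF1) as [F' [HF' [HF'1 HSpF']]].
  destruct (HS1 F' HF') as [F [HF [HFF' HS1F]]].
  assert (HFF1 : subset F F1) by (intros x h; auto).
  assert (HSpF : forall a, exists K, finite K /\ ~ rho (setminus F K) a).
  { intro a. destruct (classic (rho F a)) as [h|h].
    - destruct (HSpF' a (Hm F F' HF HF' HFF' a h)) as [K [HK HnK]].
      exists K; split; auto. intro h'. apply HnK.
      apply (rho_sm_le Fam rho F F' K K Hm Hc HF HF' HFF' HK HK (fun x h => h)); auto.
    - exists (fun _ => False); split; [apply finite_empty|]. intro h'; apply h.
      apply (rho_sm_sub Fam rho F _ Hm Hc HF finite_empty); auto. }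
  set (Rr := fun i => forall K, finite K -> exists l, rho (setminus F K) l /\ exists j, A i j l).
  set (T := fun i j => forall K, finite K -> exists l, rho (setminus F K) l /\ A i j l).
  assert (dich : (forall N, exists i, N <= i /\ Rr i) \/ (exists i, forall M, exists j, M <= j /\ T i j)).
  { apply NNPP; intro Hno. apply not_or_and in Hno as [H1 H2].
    apply not_all_ex_not in H1 as [N H1].
    assert (H2' : forall i, exists M, forall j, M <= j -> ~ T i j).
    { intro i. apply NNPP; intro h. apply H2. exists i. intro M. apply NNPP; intro h'.
      apply h. exists M. intros j Hj HT. apply h'. exists j; auto. }
    assert (Hbd : exists M, forall i, i < N -> forall j, M <= j -> ~ T i j).
    { clear H1. induction N as [|N IH].
      - exists 0; intros i Hi; lia.
      - destruct IH as [M1 HM1]. destruct (H2' N) as [M2 HM2]. exists (max M1 M2).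
        intros i Hi j Hj. destruct (Nat.eq_dec i N) as [->|ne].
        + apply HM2; lia.
        + apply HM1; lia. }
    destruct Hbd as [M HM].
    set (As := fun l => exists i, i < N /\ (exists j, j < M /\ A i j l)).
    assert (HAs : I_rho Fam rho As).
    { apply I_union_lt; auto. intros i _. apply I_union_lt; auto. }
    destruct (HS1F As HAs) as [G [HG [HGs Ht]]].
    apply HnoF. exists G. split; [exact HG|split].
    - intros i j. destruct (Nat.lt_ge_cases i N) as [Hi|Hi].
      + destruct (Nat.lt_ge_cases j M) as [Hj|Hj].
        * exists (fun _ => False); split; [apply finite_empty|].
          intros l h1 h2. apply (rho_sm_sub Fam rho G _ Hm Hc HG finite_empty) in h1.
          destruct (HGs l h1) as [_ h3]. apply h3. exists i; split; auto. exists j; auto.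
        * apply (neg_tail Fam rho F G); auto. apply (HM i Hi j Hj).
      + apply (neg_tail Fam rho F G); auto. intro h. apply H1. exists i; split; auto.
        intros K HK. destruct (h K HK) as [l [h1 h2]]. exists l; split; [exact h1|exists j; exact h2].
    - exists N. intros i Hi. apply (neg_tail Fam rho F G); auto.
      intro h. apply H1. exists i; split; [lia|auto]. }
  destruct dich as [Hr | [i Hc2]].
  - assert (g : forall m, {i | m <= i /\ Rr i}).
    { intro m; apply constructive_indefinite_description; auto. }
    destruct (gen_D Fam rho eO F (fun m l => exists j, A (proj1_sig (g m)) j l) Hm Hc HF eOs HSpF)
      as [d [Hd1 [Hd2 Hd3]]].
    { intros m K HK. exact (proj2 (proj2_sig (g m)) K HK). }
    exists (fun p => exists m n, f (d m n) = p). split.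
    + intros [i0 Hi0]. destruct (Hi0 (proj1_sig (g i0))) as [_ Hfin].
      destruct (Hfin (proj1 (proj2_sig (g i0)))) as [l Hl].
      destruct (Hd3 i0 (map (fun p => eL (snd p)) l)) as [n Hn]. apply Hn.
      destruct (Hd1 i0 n) as [j Hj]. pose proof (fA _ _ _ Hj) as E.
      assert (Hin : In (j, proj1_sig (c (d i0 n))) l).
      { apply Hl. rewrite <- E. exists i0, n; auto. }
      apply (in_map (fun p => eL (snd p))) in Hin. simpl in Hin. rewrite ec in Hin. exact Hin.
    + apply (kat_cond Fam rho eO f d F F1); auto.
  - assert (h : forall m, {j | m <= j /\ T i j}).
    { intro m; apply constructive_indefinite_description; auto. }
    destruct (gen_D Fam rho eO F (fun m l => A i (proj1_sig (h m)) l) Hm Hc HF eOs HSpF)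
      as [d [Hd1 [Hd2 Hd3]]].
    { intros m K HK. exact (proj2 (proj2_sig (h m)) K HK). }
    exists (fun p => exists m n, f (d m n) = p). split.
    + intros [i0 Hi0]. destruct (Hi0 i) as [Hlt Hge]. destruct (Nat.lt_ge_cases i i0) as [Hi|Hi].
      * destruct (Hlt Hi) as [j0 Hj0].
        destruct (Hj0 (proj1_sig (h j0)) (proj1 (proj2_sig (h j0)))) as [l Hl].
        destruct (Hd3 j0 (map eL l)) as [n Hn]. apply Hn.
        pose proof (fA _ _ _ (Hd1 j0 n)) as E.
        assert (Hin : In (proj1_sig (c (d j0 n))) l).
        { apply Hl. rewrite <- E. exists j0, n; auto. }
        apply (in_map eL) in Hin. rewrite ec in Hin. exact Hin.
      * destruct (Hge Hi) as [l Hl].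
        destruct (Hd3 0 (map (fun p => eL (snd p)) l)) as [n Hn]. apply Hn.
        pose proof (fA _ _ _ (Hd1 0 n)) as E.
        assert (Hin : In (proj1_sig (h 0), proj1_sig (c (d 0 n))) l).
        { apply Hl. rewrite <- E. exists 0, n; auto. }
        apply (in_map (fun p => eL (snd p))) in Hin. simpl in Hin. rewrite ec in Hin. exact Hin.
    + apply (kat_cond Fam rho eO f d F F1); auto.
Qed.


Definition code (i j : nat) : ord_w2_1 :=
  match i with 0 => match j with 0 => None | S j' => Some (0, j') end
             | S i' => Some (S i', j) end.

Lemma part2b {Lam Om} (Fam : (Om -> Prop) -> Prop) (rho : (Om -> Prop) -> (Lam -> Prop)) :
  Mono Fam rho -> Closed Fam -> Rprop Fam rho -> (forall F, Fam F -> infinite (rho F)) ->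
  S2 Fam rho -> P2minus Fam rho -> FinBW ord_nbhd Fam rho.
Proof.
  intros Hm Hc HR Hinf HS2 HP2 f.
  set (A := fun i j l => f l = code i j).
  destruct (classic (exists i j, ~ I_rho Fam rho (A i j))) as [[i [j Hn]] | Hall].
  { unfold I_rho in Hn. apply not_all_ex_not in Hn as [F Hn].
    apply imply_to_and in Hn as [HF Hn]. apply NNPP in Hn.
    exists F; split; auto; exists (code i j). intros U HU.
    exists (fun _ => False); split; [apply finite_empty|]. intros y [l [Hl Hfl]]. subst y.
    apply (rho_sm_sub Fam rho F _ Hm Hc HF finite_empty) in Hl.
    rewrite (Hn l Hl). apply nbhd_self; auto. }
  assert (HI : forall i j, I_rho Fam rho (A i j)).
  { intros i j; apply NNPP; intro h; apply Hall; eauto. }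
  destruct (HP2 A) as [F0 [HF0 [Ha [i0 Hb]]]]; auto.
  { intro l. unfold A. destruct (f l) as [[[|a] b]|] eqn:E.
    - exists 0, (S b); reflexivity.
    - exists (S a), b; reflexivity.
    - exists 0, 0; reflexivity. }
  { intros i j i' j' Hne l H1 H2. unfold A in *. rewrite H1 in H2. apply Hne.
    destruct i, j, i', j'; simpl in H2; inversion H2; subst; reflexivity. }
  destruct (HS2 F0 HF0) as [F [HF [HFs HS]]].
  assert (tr : forall X, EA Fam rho F0 X -> EA Fam rho F X).
  { intros X [K [HK H]]. exists K; split; [exact HK|]. intros l h. apply H.
    apply (rho_sm_le Fam rho F F0 K K Hm Hc HF HF0 HFs HK HK (fun x h => h)); auto. }
  assert (fib : forall i j, EA Fam rho F (fun l => f l = Some (i, j))).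
  { intros i j. apply tr. destruct i as [|i].
    - destruct (Ha 0 (S j)) as [K [HK Hd]]. exists K; split; auto.
    - destruct (Ha (S i) j) as [K [HK Hd]]. exists K; split; auto. }
  assert (row : forall i, i0 < i -> EA Fam rho F (fun l => exists j, f l = Some (i, j))).
  { intros i Hi. apply tr. destruct i as [|i]; [lia|].
    destruct (Hb (S i) Hi) as [K [HK Hd]]. exists K; split; auto. }
  set (P := fun i l => rho F l /\ exists j, f l = Some (i, j)).
  set (Q := fun l => rho F l /\ (f l = None \/ exists i j, i0 < i /\ f l = Some (i, j))).
  destruct (classic (exists i, i < S i0 /\ ~ I_rho Fam rho (P i))) as [[i [Hi HnP]] | HnoP].
  - destruct (HS (P i) (fun l h => proj1 h) HnP) as [G [HG [HGP Ht]]].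
    exists G; split; auto; exists (Some (S i, 0)). intros U HU.
    destruct (nbhd_use _ _ HU) as [lo [hi [Hlo [Hhi HUy]]]].
    set (M := match lo with Some (Some (a1, a2)) => S a2 | _ => 0 end).
    assert (HM : forall j, M <= j -> U (Some (i, j))).
    { intros j Hj. apply HUy.
      - subst M; destruct lo as [[[a1 a2]|]|]; simpl in *; auto; lia.
      - destruct hi as [[[b1 b2]|]|]; simpl in *; auto; lia. }
    destruct (EA_lt Fam rho G (fun j l => f l = Some (i, j)) M Hm Hc HG) as [L [HL HLs]].
    { intros j _. apply (EA_down _ _ F); auto. }
    exists L; split; auto. intros y [l [Hl Hfl]]. subst y.
    destruct (HGP l (rho_sm_sub Fam rho G L Hm Hc HG HL l Hl)) as [_ [j Hj]].
    rewrite Hj. apply HM. destruct (Nat.lt_ge_cases j M); auto.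
    exfalso; apply (HLs l Hl). exists j; auto.
  - assert (HQ : ~ I_rho Fam rho Q).
    { intro HQ.
      assert (H : I_rho Fam rho (fun l => (exists i, i < S i0 /\ P i l) \/ Q l)).
      { apply I_union; auto. apply I_union_lt; auto.
        intros i Hi. apply NNPP; intro h; apply HnoP; eauto. }
      apply (H F HF). intros l hl. destruct (f l) as [[a b]|] eqn:E.
      - destruct (Nat.lt_ge_cases i0 a).
        + right; split; auto; right; exists a, b; auto.
        + left; exists a; split; [lia|]; split; auto; exists b; auto.
      - right; split; auto. }
    destruct (HS Q (fun l h => proj1 h) HQ) as [G [HG [HGQ Ht]]].
    exists G; split; auto; exists None. intros U HU.
    destruct (nbhd_use _ _ HU) as [lo [hi [Hlo [Hhi HUy]]]].
    set (N := match lo with Some (Some (a1, a2)) => a1 | _ => 0 end).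
    assert (HN : forall y, (y = None \/ exists i j, N < i /\ y = Some (i, j)) -> U y).
    { intros y Hy. apply HUy.
      - subst N; destruct lo as [[[a1 a2]|]|]; simpl in *; try contradiction; auto.
        destruct Hy as [->|[i [j [h ->]]]]; simpl; auto; lia.
      - destruct hi as [[[b1 b2]|]|]; simpl in *; try contradiction; auto. }
    destruct (EA_lt Fam rho G (fun i l => i0 < i /\ exists j, f l = Some (i, j)) (S N) Hm Hc HG) as [L [HL HLs]].
    { intros i _. destruct (Nat.lt_ge_cases i0 i).
      - apply (EA_sub _ _ _ (fun l => exists j, f l = Some (i, j))); [intros l [_ h]; auto|].
        apply (EA_down _ _ F); auto.
      - apply (EA_sub _ _ _ (fun _ => False)); [intros l [h _]; lia|apply EA_empty]. }
    exists L; split; auto. intros y [l [Hl Hfl]]. subst y.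
    destruct (HGQ l (rho_sm_sub Fam rho G L Hm Hc HG HL l Hl)) as [_ [Hn|[i [j [Hi Hj]]]]].
    + apply HN; auto.
    + apply HN. right. exists i, j; split; auto. destruct (Nat.lt_ge_cases N i); auto.
      exfalso; apply (HLs l Hl). exists i; split; [lia|]; split; auto; exists j; auto.
Qed.

Theorem theorem4p2 (Lam Om : Type) (Fam : (Om -> Prop) -> Prop)
  (rho : (Om -> Prop) -> (Lam -> Prop)) :
  partition_regular Fam rho ->
  ((rho_BI_le_K Fam rho -> ~ P2minus Fam rho) /\
   (S1 Fam rho -> (rho_BI_le_K Fam rho <-> ~ P2minus Fam rho))) /\
  ((FinBW ord_nbhd Fam rho -> P2minus Fam rho) /\
   (S2 Fam rho -> (P2minus Fam rho <-> FinBW ord_nbhd Fam rho))).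
Proof.
  intros [HLam [HOm [Hex [Hinfs [Hc [Hinf [Hm [HR HS]]]]]]]].
  split; split.
  - apply part1a; assumption.
  - intros HS1; split.
    + apply part1a; assumption.
    + apply part1b; assumption.
  - apply part2a; assumption.
  - intros HS2; split.
    + apply part2b; assumption.
    + apply part2a; assumption.
Qed.
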